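(* Let $V$ be an $\mathcal{L}[\frac12]$-module on which $c$ acts as $0$, with a basis $\{x_k\mid k\in\frac12\mathbb{Z}\}$ and constants $a,b\in\mathbb{C}$, $f_{p,k},g_{n,k}\in\mathbb{C}$ such that for all $p\in\frac12+\mathbb{Z}$, $n\in\mathbb{Z}$, $k\in\frac12\mathbb{Z}$: $Y_px_k=f_{p,k}x_{k+p}$, $M_nx_k=g_{n,k}x_{k+n}$, $L_nx_k=(a+k+bn)x_{k+n}$ if $k\in\mathbb{Z}$ and $L_nx_k=(a+k+(b+\frac12)n)x_{k+n}$ if $k\in\frac12+\mathbb{Z}$. Then for all $k,j\in\mathbb{Z}$ and $n,p\in\frac12+\mathbb{Z}$, $$(a+k+2bn)f_{p,j}=(a+j+2bp)f_{n,k},$$ and there exists $f_0\in\mathbb{C}$ such that $f_{p,j}=(a+j+2bp)f_0$ for all $j\in\mathbb{Z}$, $p\in\frac12+\mathbb{Z}$.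
   Context: $\mathcal{L}[\frac12]$ is the complex Lie algebra with basis $\{L_m,Y_p,M_n,c\mid m,n\in\mathbb{Z},\ p\in\frac12+\mathbb{Z}\}$ and brackets $[L_m,L_{m'}]=(m'-m)L_{m+m'}+\delta_{m,-m'}\frac{m^3-m}{12}c$, $[L_m,Y_p]=(p-\frac m2)Y_{p+m}$, $[L_m,M_n]=nM_{n+m}$, $[Y_p,Y_{p'}]=(p'-p)M_{p+p'}$, $[Y_p,M_n]=[M_n,M_{n'}]=0$, $c$ central. *)

(* Defs.v *)
From HB Require Import structures.
From mathcomp Require Import all_boot all_order all_algebra.
Set Implicit Arguments. Unset Strict Implicit. Unset Printing Implicit Defensive.
Import Order.TTheory GRing.Theory Num.Theory.
Local Open Scope ring_scope.

(* Encoding conventions: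
   - an element s of (1/2)Z is encoded by the integer t = 2s;
   - an element p of 1/2 + Z is encoded by the integer q with p = q + 1/2
     (i.e. p = (2q+1)/2);
   - m, n in Z are encoded by themselves. *)

Definition hz {R : numFieldType} (q : int) : R := (2 * q + 1)%:~R / 2.
Definition halfv {R : numFieldType} (t : int) : R := t%:~R / 2.

Definition is_L12_module_c0 {R : numFieldType} {V : lmodType R}
  (L : int -> {linear V -> V}) (Y : int -> {linear V -> V})
  (M : int -> {linear V -> V}) : Prop :=
  [/\ (forall (m m' : int) (v : V),
          L m (L m' v) - L m' (L m v) = (m' - m)%:~R *: L (m + m') v),
      (forall (m q : int) (v : V),
          L m (Y q v) - Y q (L m v) = (hz q - m%:~R / 2) *: Y (q + m) v),
      (forall (m n : int) (v : V),
          L m (M n v) - M n (L m v) = n%:~R *: M (n + m) v),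
      (forall (q q' : int) (v : V),
          Y q (Y q' v) - Y q' (Y q v) = (hz q' - hz q) *: M (q + q' + 1) v) &
      ((forall (q n : int) (v : V), Y q (M n v) - M n (Y q v) = 0) /\ 
      (forall (n n' : int) (v : V), M n (M n' v) - M n' (M n v) = 0))].

(* x : int -> V, with x t standing for x_{t/2}, is a (Hamel) basis of V. *)
Definition is_basis {R : numFieldType} {V : lmodType R} (x : int -> V) : Prop :=
  (forall (s : seq int) (c : int -> R), uniq s ->
      \sum_(i <- s) c i *: x i = 0 -> forall i, i \in s -> c i = 0)
  /\ (forall v : V, exists (s : seq int) (c : int -> R),
      v = \sum_(i <- s) c i *: x i).

(* Main.v *)
Require Import Defs.
From HB Require Import structures.
From mathcomp Require Import all_boot all_order all_algebra.
From Stdlib Require Import Ring Field Classical Lia.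
Import Order.TTheory GRing.Theory Num.Theory.

Section Abs.
Variables (K : Type) (z o : K) (ad mu sb : K -> K -> K) (op iv : K -> K) (dv : K -> K -> K).
Hypothesis FT : field_theory z o ad mu sb op dv iv (@eq K).
Add Field KF : FT.
Declare Scope kscope.
Delimit Scope kscope with K.
Local Notation "x + y" := (ad x y) : kscope.
Local Notation "x * y" := (mu x y) : kscope.
Local Notation "x - y" := (sb x y) : kscope.
Local Notation "x / y" := (dv x y) : kscope.
Local Notation "- x" := (op x) : kscope.
Local Notation t2 := (ad o o).
Local Open Scope kscope.

Lemma sub0 x y : x - y = z -> x = y.
Proof. move=> H; transitivity ((x - y) + y); [ring | rewrite H; ring]. Qed.
Lemma eq0s x y : x = y -> x - y = z.
Proof. move=> ->; ring. Qed.
Arguments eq0s {x y}.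

Lemma A_prop (a b c J M P : K) : t2 <> z ->
  (a + J + t2 * b * P) * c * (a + (J + P) + (b + o / t2) * M)
  - (a + J + b * M) * ((a + (J + M) + t2 * b * P) * c)
  = (P - M / t2) * ((a + J + t2 * b * (P + M)) * c).
Proof. move=> h. field. exact h. Qed.

Lemma A_relG (a b J Jp P M X Y Z : K) : t2 <> z -> Jp = J + o -> P = o / t2 -> M = o ->
  X * (a + (J + P) + (b + o / t2) * M) - (a + J + b * M) * Y = (P - M / t2) * Z ->
  (a + Jp + t2 * b * P) * X = (a + J + t2 * b * P) * Y.
Proof. move=> h -> -> -> H. apply: sub0. rewrite -(eq0s H). field. exact h. Qed.

Lemma A_relH (a b J Jp P M X Y Z : K) : t2 <> z -> Jp = J + o -> P = - (o / t2) -> M = - o ->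
  X * (a + (Jp + P) + (b + o / t2) * M) - (a + Jp + b * M) * Y = (P - M / t2) * Z ->
  (a + Jp + t2 * b * P) * Y = (a + J + t2 * b * P) * X.
Proof. move=> h -> -> -> H. symmetry. apply: sub0. rewrite -(eq0s H). field. exact h. Qed.

Lemma A_deg (a b J0 Jp Jm1 Jm2 P0 Pm M1 Mm1 Mm2 Mm3 Tt g1 g0 gm1 gm2 f1a f1b h1 hm1 k : K) :
  t2 <> z -> a + J0 + t2 * b * P0 = z ->
  Jp = J0 + o -> Jm1 = J0 - o -> Jm2 = J0 - t2 -> P0 = o / t2 -> Pm = - (o / t2) ->
  M1 = o -> Mm1 = - o -> Mm2 = - t2 -> Mm3 = - (o + t2) -> Tt = t2 * b ->
  g0 * (a + (J0 + P0) + (b + o / t2) * M1) - (a + J0 + b * M1) * g1 = (P0 - M1 / t2) * f1a ->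
  gm2 * (a + (Jm2 + P0) + (b + o / t2) * M1) - (a + Jm2 + b * M1) * gm1 = (P0 - M1 / t2) * f1b ->
  g1 * (a + (Jp + P0) + (b + o / t2) * Mm1) - (a + Jp + b * Mm1) * g0 = (P0 - Mm1 / t2) * h1 ->
  gm1 * (a + (Jm1 + P0) + (b + o / t2) * Mm1) - (a + Jm1 + b * Mm1) * gm2 = (P0 - Mm1 / t2) * hm1 ->
  g1 * (a + (Jp + P0) + (b + o / t2) * Mm3) - (a + Jp + b * Mm3) * gm2 = (P0 - Mm3 / t2) * k ->
  h1 * (a + (Jp + Pm) + (b + o / t2) * Mm2) - (a + Jp + b * Mm2) * hm1 = (Pm - Mm2 / t2) * k ->
  ((o + t2) * Tt * Tt - Tt - o) * (g1 + gm1) = z.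
Proof.
move=> h HA -> -> -> EP -> -> -> -> -> ->.
have Ea : a = - J0 - b.
  apply: sub0; rewrite -HA EP; field; exact h.
subst a P0.
move=> /eq0s e1 /eq0s e2 /eq0s e3 /eq0s e4 /eq0s e5 /eq0s e6.
match type of e1 with ?E1 = _ =>
match type of e2 with ?E2 = _ =>
match type of e3 with ?E3 = _ =>
match type of e4 with ?E4 = _ =>
match type of e5 with ?E5 = _ =>
match type of e6 with ?E6 = _ =>
  transitivity (- (o / t2) * (E5 - (t2 * t2) * E6
      + ((t2 * t2 * (o + t2)) * b + t2) * (o - t2 * b) * E1
      + ((t2 * t2 * (o + t2)) * b + t2) * E3
      + (t2 * t2) * (o - (o + t2) * b) * E4
      + ((o + t2) - t2 * (t2 * t2 * (o + t2)) * b * b) * E2))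
end end end end end end.
- field; exact h.
- rewrite e1 e2 e3 e4 e5 e6; ring.
Qed.

Lemma N1 : t2 <> z -> o / t2 - (- o) / t2 = o.
Proof. move=> h; field; exact h. Qed.
Lemma N2 M : t2 <> z -> o / t2 - M / t2 = (o - M) / t2.
Proof. move=> h; field; exact h. Qed.
Lemma N3 : t2 <> z -> - (o / t2) - t2 / t2 = - ((o + t2) / t2).
Proof. move=> h; field; exact h. Qed.
Lemma N4 : t2 <> z -> - (o / t2) - o / t2 = - o.
Proof. move=> h; field; exact h. Qed.
Lemma N5 a b J0 J1 : t2 <> z -> a + J0 + t2 * b * (o / t2) = z ->
  a + J1 + t2 * b * (- (o / t2)) = z -> J1 - J0 = t2 * b.
Proof.
move=> h H0 H1. apply: sub0.
transitivity ((a + J1 + t2 * b * (- (o / t2))) - (a + J0 + t2 * b * (o / t2))).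
- field; exact h.
- rewrite H0 H1; ring.
Qed.
End Abs.

Local Open Scope ring_scope.

Lemma odd_2z1 (z : int) : odd `|(2 * z + 1)%R|%N.
Proof.
case: z => n.
- rewrite (_ : 2 * n%:Z + 1 = (n.*2.+1)%N) //. by rewrite /= odd_double.
  by rewrite -[(n.*2.+1)%N]addn1 -addnn !PoszD mulr_natl mulr2n.
- rewrite NegzE mulrN addrC -opprB abszN.
  rewrite (_ : 2 * (n.+1)%:Z - 1 = (n.*2.+1)%N) //.
  by rewrite /= odd_double.
  by rewrite -[(n.*2.+1)%N]addn1 -addnn !PoszD -[n.+1]addn1 PoszD mulrDr mulr1 mulr_natl mulr2n -addrA.
Qed.

Lemma even_2z (z : int) : ~~ odd `|(2 * z)%R|%N.
Proof. by rewrite abszM /= oddM. Qed.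

Lemma basis_coef (R : numClosedFieldType) (V : lmodType R) (x : int -> V) (T : int) (k : R) :
  is_basis x -> k *: x T = 0 -> k = 0.
Proof.
move=> [Hi _] H.
apply: (Hi [:: T] (fun _ => k) erefl _ T); last by rewrite mem_head.
by rewrite big_seq1.
Qed.

Lemma eq1 (R : numClosedFieldType) (V : lmodType R)
  (L : int -> {linear V -> V}) (Y : int -> {linear V -> V})
  (M : int -> {linear V -> V}) (x : int -> V)
  (a b : R) (f : int -> int -> R) :
  is_L12_module_c0 L Y M ->
  is_basis x ->
  (forall (q t : int), Y q (x t) = f q t *: x (t + (2 * q + 1))) ->
  (forall (n t : int), ~~ odd `|t|%N ->
      L n (x t) = (a + halfv t + b * n%:~R) *: x (t + 2 * n)) ->
  (forall (n t : int), odd `|t|%N ->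
      L n (x t) = (a + halfv t + (b + 1 / 2) * n%:~R) *: x (t + 2 * n)) ->
  forall q j m : int,
  f q (2 * j) * (a + halfv (2 * j + (2 * q+1)) + (b + 1/2) * m%:~R)
  - (a + halfv (2 * j) + b * m%:~R) * f q (2 * j + 2 * m)
  = (hz q - m%:~R / 2) * f (q+m) (2 * j).
Proof.
move=> HL Hb HY HLe HLo q j m.
have [_ HLY _ _ _] := HL.
set T := 2 * j + (2 * q + 1) + 2 * m.
have e1 : L m (Y q (x (2 * j))) =
   (f q (2 * j) * (a + halfv (2 * j + (2 * q + 1)) + (b + 1/2) * m%:~R)) *: x T.
  rewrite HY linearZ /= HLo; first by rewrite scalerA.
  by rewrite (_ : 2 * j + (2 * q + 1) = 2 * (j + q) + 1) ?odd_2z1 // mulrDr addrA.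
have e2 : Y q (L m (x (2 * j))) =
   ((a + halfv (2 * j) + b * m%:~R) * f q (2 * j + 2 * m)) *: x T.
  rewrite HLe ?even_2z // linearZ /= HY scalerA /T; congr (_ *: x _).
  by rewrite addrAC.
have e3 : Y (q + m) (x (2 * j)) = f (q + m) (2 * j) *: x T.
  rewrite HY /T; congr (_ *: x _).
  by rewrite mulrDr addrAC addrA.
have := HLY m q (x (2 * j)).
rewrite e1 e2 e3 scalerA => /eqP; rewrite -scalerBl -subr_eq0 -scalerBl => /eqP /(@basis_coef _ _ _ _ _ Hb) /eqP.
by rewrite subr_eq0 => /eqP.
Qed.

Section Chain.
Variable R : numClosedFieldType.
Variables (W G : int -> R).
Hypothesis HW : forall j, W (j + 1) = W j + 1.
Hypothesis Hrel : forall j, W (j + 1) * G j = W j * G (j + 1).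

Lemma Wup k (n : nat) : W (k + n%:Z) = W k + n%:R.
Proof.
elim: n => [|n IH]; first by rewrite addr0; symmetry; exact: addr0.
by rewrite -addn1 PoszD addrA HW IH natrD addrA.
Qed.

Lemma Wdown k (n : nat) : W (k - n%:Z) = W k - n%:R.
Proof.
have := Wup (k - n%:Z) n. by rewrite subrK => ->; rewrite addrK.
Qed.

Lemma Gup k c : G k = W k * c -> (forall n : nat, W (k + n%:Z) != 0) ->
  forall n : nat, G (k + n%:Z) = W (k + n%:Z) * c.
Proof.
move=> h0 nz; elim => [|n IH]; first by rewrite addr0.
have e : k + (n.+1)%:Z = (k + n%:Z) + 1 by rewrite -addn1 PoszD addrA.
rewrite e; apply: (mulfI (nz n)).
by rewrite -Hrel IH mulrCA.
Qed.

Lemma Gdown k c : G k = W k * c -> (forall n : nat, W (k - n%:Z) != 0) ->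
  forall n : nat, G (k - n%:Z) = W (k - n%:Z) * c.
Proof.
move=> h0 nz; elim => [|n IH]; first by rewrite subr0.
have e : k - n%:Z = (k - (n.+1)%:Z) + 1.
  by rewrite -addn1 PoszD opprD addrA subrK.
apply: (mulfI (nz n)).
have := Hrel (k - (n.+1)%:Z). rewrite -e => ->.
by rewrite IH mulrA (mulrC (W _)) -mulrA.
Qed.

Lemma chain_nondeg : (forall j, W j != 0) -> exists c, forall j, G j = W j * c.
Proof.
move=> nz; exists (G 0 / W 0) => j.
have h0 : G 0 = W 0 * (G 0 / W 0) by rewrite mulrC divfK.
case: j => n.
- by have := @Gup _ _ h0 (fun n => nz _) n; rewrite add0r.
- by rewrite NegzE; have := @Gdown _ _ h0 (fun n => nz _) n.+1; rewrite sub0r.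
Qed.

Lemma chain_deg j0 : W j0 = 0 -> G (j0 - 1) + G (j0 + 1) = 0 ->
  exists c, forall j, G j = W j * c.
Proof.
move=> w0 s0; exists (G (j0 + 1)) => j.
have wp : W (j0 + 1) = 1 by rewrite HW w0 add0r.
have wm : W (j0 - 1) = -1.
  by apply/eqP; rewrite -subr_eq0 opprK -HW subrK w0.
have g0 : G j0 = 0 by have := Hrel j0; rewrite wp w0 mul0r mul1r.
have hp : G (j0 + 1) = W (j0 + 1) * G (j0 + 1) by rewrite wp mul1r.
have hm : G (j0 - 1) = W (j0 - 1) * G (j0 + 1).
  by rewrite wm mulN1r; apply/eqP; rewrite -addr_eq0 s0.
have e : j = j0 + (j - j0) by rewrite addrC subrK.
rewrite e; case: (j - j0) => [[|n]|n].
- by rewrite addr0 w0 g0 mul0r.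
- have e2 : j0 + (n.+1)%:Z = (j0 + 1) + n%:Z by rewrite -addn1 PoszD addrA addrAC.
  rewrite e2; apply: (@Gup _ _ hp) => m.
  by rewrite Wup wp nat1r pnatr_eq0.
- have e2 : j0 + Negz n = (j0 - 1) - n%:Z by rewrite NegzE -addn1 PoszD opprD addrA addrAC.
  rewrite e2; apply: (@Gdown _ _ hm) => m.
  by rewrite Wdown wm -opprD oppr_eq0 nat1r pnatr_eq0.
Qed.
End Chain.
Lemma int3 (t : int) : 3 * t * t - t - 1 != 0.
Proof.
case: t => n.
- rewrite (_ : (3 : int) * n%:Z * n%:Z - n%:Z - 1 = (3*n*n)%N%:Z - (n+1)%N%:Z); last first.
    by rewrite !PoszM PoszD opprD addrA.
  rewrite subr_eq0 eqz_nat; apply/eqP => H; move: H.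
  rewrite -!multE -!plusE. destruct n; nia.
- rewrite (_ : (3 : int) * (Negz n) * (Negz n) - (Negz n) - 1 = (3*n.+1*n.+1 + n)%N%:Z); last first.
    rewrite NegzE !mulrN mulNr !opprK -addrA PoszD !PoszM. congr (_ + _).
    by rewrite -[n.+1]addn1 PoszD addrK.
  rewrite eqz_nat; apply/eqP => H; move: H.
  rewrite -!multE -!plusE. nia.
Qed.
Lemma RFT (R : numClosedFieldType) :
  field_theory (0:R) 1 +%R *%R (fun x y => x - y) -%R (fun x y => x / y) GRing.inv (@eq R).
Proof.
constructor.
- constructor; [exact: add0r|exact: addrC|exact: addrA|exact: mul1r|exact: mulrC|exact: mulrA|exact: mulrDl|done|exact: subrr].
- exact/eqP/oner_neq0.
- done.
- by move=> p /eqP; apply: mulVf.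
Qed.

Lemma two_neq0 (R : numClosedFieldType) : (1 + 1 : R) <> 0.
Proof. by apply/eqP; rewrite (_ : 1 + 1 = 2) // pnatr_eq0. Qed.

Definition wf {R : numClosedFieldType} (a b : R) (q j : int) : R := a + j%:~R + 2 * b * hz q.

Lemma hzD (R : numClosedFieldType) (q m : int) : hz (q + m) = hz q + (m%:~R : R).
Proof.
rewrite /hz mulrDr -addrAC !intrD mulrDl; congr (_ + _).
by rewrite intrM rmorph_nat mulrC mulKf // pnatr_eq0.
Qed.

Lemma prop (R : numClosedFieldType) (a b c : R) (F : int -> int -> R)
  (Heq : forall q j m : int, F q j * (a + (j%:~R + hz q) + (b + 1/2) * m%:~R)
     - (a + j%:~R + b * m%:~R) * F q (j + m) = (hz q - m%:~R / 2) * F (q + m) j)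
  (q0 m j : int) : (hz q0 : R) - m%:~R / 2 != 0 ->
  F q0 j = wf a b q0 j * c -> F q0 (j + m) = wf a b q0 (j + m) * c ->
  F (q0 + m) j = wf a b (q0 + m) j * c.
Proof.
move=> hnz h1 h2; apply: (mulfI hnz); rewrite -Heq h1 h2 /wf hzD intrD.
exact: (@A_prop _ _ _ _ _ _ _ _ _ (RFT R) a b c (j%:~R : R) (m%:~R : R) (hz q0 : R) (@two_neq0 R)).
Qed.

Lemma c1 (R : numClosedFieldType) : ((1 : int)%:~R : R) = 1. Proof. by rewrite rmorph1. Qed.
Lemma cm1 (R : numClosedFieldType) : ((-1 : int)%:~R : R) = -1. Proof. by []. Qed.
Lemma cm2 (R : numClosedFieldType) : ((-2 : int)%:~R : R) = -(1+1). Proof. by []. Qed.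
Lemma cm3 (R : numClosedFieldType) : ((-3 : int)%:~R : R) = -(1+(1+1)). Proof. by []. Qed.
Lemma c2 (R : numClosedFieldType) : ((2 : int)%:~R : R) = 1+1. Proof. by rewrite rmorph_nat. Qed.
Lemma hz0 (R : numClosedFieldType) : (hz 0 : R) = 1/2. Proof. by rewrite /hz mulr0 add0r rmorph1. Qed.
Lemma hzm1 (R : numClosedFieldType) : (hz (-1) : R) = -(1/2).
Proof. rewrite /hz (_ : 2 * -1 + 1 = -1 :> int) //. by rewrite mulNr. Qed.

Lemma halfv_even (R : numClosedFieldType) (j : int) : (halfv (2 * j) : R) = j%:~R.
Proof. by rewrite /halfv intrM rmorph_nat mulrC mulKf // pnatr_eq0. Qed.

Lemma halfv_odd (R : numClosedFieldType) (j q : int) :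
  (halfv (2 * j + (2 * q + 1)) : R) = j%:~R + hz q.
Proof. by rewrite /halfv intrD mulrDl -/(halfv (2 * j)) halfv_even. Qed.

Lemma eq1g (R : numClosedFieldType) (V : lmodType R)
  (L : int -> {linear V -> V}) (Y : int -> {linear V -> V})
  (M : int -> {linear V -> V}) (x : int -> V)
  (a b : R) (f : int -> int -> R) :
  is_L12_module_c0 L Y M ->
  is_basis x ->
  (forall (q t : int), Y q (x t) = f q t *: x (t + (2 * q + 1))) ->
  (forall (n t : int), ~~ odd `|t|%N ->
      L n (x t) = (a + halfv t + b * n%:~R) *: x (t + 2 * n)) ->
  (forall (n t : int), odd `|t|%N ->
      L n (x t) = (a + halfv t + (b + 1 / 2) * n%:~R) *: x (t + 2 * n)) ->
  forall q j m : int,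
  f q (2 * j) * (a + (j%:~R + hz q) + (b + 1/2) * m%:~R)
  - (a + j%:~R + b * m%:~R) * f q (2 * (j + m))
  = (hz q - m%:~R / 2) * f (q + m) (2 * j).
Proof.
move=> HL Hb HY HLe HLo q j m.
by have := @eq1 R V L Y M x a b f HL Hb HY HLe HLo q j m; rewrite halfv_odd halfv_even -mulrDr; apply.
Qed.

Lemma wfS (R : numClosedFieldType) (a b : R) q j : wf a b q (j + 1) = wf a b q j + 1.
Proof. by rewrite /wf intrD rmorph1 addrA (addrAC _ 1). Qed.

Section MainR.
Variable R : numClosedFieldType.
Variables (a b : R) (F : int -> int -> R).
Hypothesis Heq : forall q j m : int, F q j * (a + (j%:~R + hz q) + (b + 1/2) * m%:~R)
     - (a + j%:~R + b * m%:~R) * F q (j + m) = (hz q - m%:~R / 2) * F (q + m) j.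

Lemma relG j : wf a b 0 (j + 1) * F 0 j = wf a b 0 j * F 0 (j + 1).
Proof.
have Jp : ((j + 1)%:~R : R) = j%:~R + 1 by rewrite intrD rmorph1.
exact: (@A_relG _ _ _ _ _ _ _ _ _ (RFT R) a b (j%:~R) ((j + 1)%:~R) (hz 0) (1%:~R)
  (F 0 j) (F 0 (j + 1)) (F (0 + 1) j) (@two_neq0 R) Jp (hz0 R) (c1 R) (Heq 0 j 1)).
Qed.

Lemma relH j : wf a b (-1) (j + 1) * F (-1) j = wf a b (-1) j * F (-1) (j + 1).
Proof.
have Jp : ((j + 1)%:~R : R) = j%:~R + 1 by rewrite intrD rmorph1.
have H := Heq (-1) (j + 1) (-1).
rewrite (_ : j + 1 + -1 = j) ?addrK // in H.
exact: (@A_relH _ _ _ _ _ _ _ _ _ (RFT R) a b (j%:~R) ((j + 1)%:~R) (hz (-1)) ((-1)%:~R)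
  (F (-1) (j + 1)) (F (-1) j) (F (-1 + -1) (j + 1)) (@two_neq0 R) Jp (hzm1 R) (cm1 R) H).
Qed.

Lemma from_base0 c : (forall j, F 0 j = wf a b 0 j * c) -> forall q j, F q j = wf a b q j * c.
Proof.
move=> h0.
have hm1 : forall j, F (-1) j = wf a b (-1) j * c.
  move=> j; have := @prop R a b c F Heq 0 (-1) j _ (h0 j) (h0 (j + -1)).
  apply.
  have -> : (hz 0 : R) - (-1)%:~R / 2 = 1.
    rewrite hz0; exact: (@N1 _ _ _ _ _ _ _ _ _ (RFT R) (@two_neq0 R)).
  exact: oner_neq0.
move=> q j; case: (eqVneq q 1) => [->|hq].
  have := @prop R a b c F Heq (-1) 2 j _ (hm1 j) (hm1 (j + 2)).
  apply.
  have -> : (hz (-1) : R) - 2%:~R / 2 = - ((1 + (1 + 1)) / 2).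
    rewrite hzm1; exact: (@N3 _ _ _ _ _ _ _ _ _ (RFT R) (@two_neq0 R)).
  rewrite oppr_eq0; apply: mulf_neq0; first by rewrite (_ : 1 + (1 + 1) = 3%:R :> R) // pnatr_eq0.
  by rewrite invr_eq0 pnatr_eq0.
have := @prop R a b c F Heq 0 q j _ (h0 j) (h0 (j + q)).
rewrite add0r; apply.
have -> : (hz 0 : R) - q%:~R / 2 = (1 - q%:~R) / 2.
  rewrite hz0; exact: (@N2 _ _ _ _ _ _ _ _ _ (RFT R) (q%:~R) (@two_neq0 R)).
rewrite mulf_neq0 // ?invr_eq0 ?pnatr_eq0 // subr_eq0 eq_sym.
by rewrite -(rmorph1 (intr : int -> R)) /= eqr_int.
Qed.

Lemma base0_from_m1 c : (forall j, F (-1) j = wf a b (-1) j * c) -> forall j, F 0 j = wf a b 0 j * c.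
Proof.
move=> hm j.
have := @prop R a b c F Heq (-1) 1 j _ (hm j) (hm (j + 1)).
apply.
have -> : (hz (-1) : R) - 1%:~R / 2 = - 1.
  rewrite hzm1 c1; exact: (@N4 _ _ _ _ _ _ _ _ _ (RFT R) (@two_neq0 R)).
by rewrite oppr_eq0 oner_neq0.
Qed.

End MainR.

Section MainR2.
Variable R : numClosedFieldType.
Variables (a b : R) (F : int -> int -> R).
Hypothesis Heq : forall q j m : int, F q j * (a + (j%:~R + hz q) + (b + 1/2) * m%:~R)
     - (a + j%:~R + b * m%:~R) * F q (j + m) = (hz q - m%:~R / 2) * F (q + m) j.

Lemma degR j0 j1 : wf a b 0 j0 = 0 -> wf a b (-1) j1 = 0 ->
  F 0 (j0 - 1) + F 0 (j0 + 1) = 0.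
Proof.
move=> w0 w1.
have H1 := Heq 0 j0 1.
have H2 := Heq 0 (j0 - 2) 1.
rewrite (_ : j0 - 2 + 1 = j0 - 1) in H2; last first.
  by rewrite -addrA; congr (_ + _).
have H3 := Heq 0 (j0 + 1) (-1).
rewrite (_ : j0 + 1 + -1 = j0) ?addrK // in H3.
have H4 := Heq 0 (j0 - 1) (-1).
rewrite (_ : j0 - 1 + -1 = j0 - 2) in H4; last first.
  by rewrite -addrA; congr (_ + _).
have H5 := Heq 0 (j0 + 1) (-3).
rewrite (_ : j0 + 1 + -3 = j0 - 2) in H5; last first.
  by rewrite -addrA; congr (_ + _).
have H6 := Heq (-1) (j0 + 1) (-2).
rewrite (_ : j0 + 1 + -2 = j0 - 1) in H6; last first.
  by rewrite -addrA; congr (_ + _).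
have Jp : ((j0 + 1)%:~R : R) = j0%:~R + 1 by rewrite intrD rmorph1.
have Jm1 : ((j0 - 1)%:~R : R) = j0%:~R - 1 by rewrite intrB rmorph1.
have Jm2 : ((j0 - 2)%:~R : R) = j0%:~R - (1 + 1) by rewrite intrB c2.
have HT : ((j1 - j0)%:~R : R) = (1 + 1) * b.
  rewrite intrB.
  apply: (@N5 _ _ _ _ _ _ _ _ _ (RFT R) a b (j0%:~R) (j1%:~R) (@two_neq0 R)).
  - by move: w0; rewrite /wf hz0.
  - by move: w1; rewrite /wf hzm1.
have T := @A_deg _ _ _ _ _ _ _ _ _ (RFT R) a b (j0%:~R) ((j0 + 1)%:~R) ((j0 - 1)%:~R)
  ((j0 - 2)%:~R) (hz 0) (hz (-1)) (1%:~R) ((-1)%:~R) ((-2)%:~R) ((-3)%:~R) ((j1 - j0)%:~R)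
  (F 0 (j0 + 1)) (F 0 j0) (F 0 (j0 - 1)) (F 0 (j0 - 2)) (F (0 + 1) j0) (F (0 + 1) (j0 - 2))
  (F (-1) (j0 + 1)) (F (-1) (j0 - 1)) (F (-3) (j0 + 1)) (@two_neq0 R) w0 Jp Jm1 Jm2
  (hz0 R) (hzm1 R) (c1 R) (cm1 R) (cm2 R) (cm3 R) HT H1 H2 H3 H4 H5 H6.
move/eqP: T; rewrite mulf_eq0 => /orP [|/eqP]; last by rewrite addrC.
move: (j1 - j0) => t.
have -> : (1 + (1 + 1)) * t%:~R * t%:~R - t%:~R - 1 = ((3 * t * t - t - 1)%:~R : R).
  by rewrite !intrB !intrM rmorph1 rmorph_nat.
by rewrite intr_eq0 (negbTE (int3 t)).
Qed.

Lemma keyR : exists c, forall q j, F q j = wf a b q j * c.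
Proof.
have HW0 := @wfS R a b 0.
have HWm := @wfS R a b (-1).
case: (classic (forall j, wf a b 0 j != 0)) => [nz0|/not_all_ex_not [j0 /negP/negbNE/eqP w0]].
  have [c hc] := @chain_nondeg R _ _ (@relG R a b F Heq) nz0.
  by exists c; apply: (@from_base0 R a b F Heq c).
case: (classic (forall j, wf a b (-1) j != 0)) => [nz1|/not_all_ex_not [j1 /negP/negbNE/eqP w1]].
  have [c hc] := @chain_nondeg R _ _ (@relH R a b F Heq) nz1.
  by exists c; apply: (@from_base0 R a b F Heq c); apply: (@base0_from_m1 R a b F Heq c).
have [c hc] := @chain_deg R _ _ HW0 (@relG R a b F Heq) j0 w0 (degR j0 j1 w0 w1).
by exists c; apply: (@from_base0 R a b F Heq c).
Qed.
End MainR2.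

Theorem lemma3p3 (R : numClosedFieldType) (V : lmodType R)
  (L : int -> {linear V -> V}) (Y : int -> {linear V -> V})
  (M : int -> {linear V -> V}) (x : int -> V)
  (a b : R) (f : int -> int -> R) (g : int -> int -> R) :
  is_L12_module_c0 L Y M ->
  is_basis x ->
  (forall (q t : int), Y q (x t) = f q t *: x (t + (2 * q + 1))) ->
  (forall (n t : int), M n (x t) = g n t *: x (t + 2 * n)) ->
  (forall (n t : int), ~~ odd `|t|%N ->
      L n (x t) = (a + halfv t + b * n%:~R) *: x (t + 2 * n)) ->
  (forall (n t : int), odd `|t|%N ->
      L n (x t) = (a + halfv t + (b + 1 / 2) * n%:~R) *: x (t + 2 * n)) ->
  (forall (k j qn qp : int),
      (a + k%:~R + 2 * b * hz qn) * f qp (2 * j)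
      = (a + j%:~R + 2 * b * hz qp) * f qn (2 * k))
  /\ (exists f0 : R, forall (j qp : int),
      f qp (2 * j) = (a + j%:~R + 2 * b * hz qp) * f0).
Proof.
move=> HL Hb HY HM HLe HLo.
have Heq := @eq1g R V L Y M x a b f HL Hb HY HLe HLo.
have [c hc] := @keyR R a b (fun q j => f q (2 * j)) Heq.
split.
- move=> k j qn qp.
  have -> : f qp (2 * j) = wf a b qp j * c by exact: hc.
  have -> : f qn (2 * k) = wf a b qn k * c by exact: hc.
  by rewrite /wf mulrCA.
- by exists c => j qp; exact: hc.
Qed.
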